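(* Let $a,b\in\mathbb{Z}[\tau]$ with $0<a<b<1$, and let $f\in F_\tau'=[F_\tau,F_\tau]$ be such that $f\in F_\tau^c[a,b]$. Then $f\in F_\tau'[a,b]$.
   Context: Let $\tau=(\sqrt5-1)/2$. $F_\tau$ is the group, under composition, of orientation-preserving homeomorphisms of $[0,1]$ that are piecewise linear with finitely many breakpoints, all breakpoints in $\mathbb{Z}[\tau]=\{a+b\tau:a,b\in\mathbb{Z}\}$ and all slopes integer powers of $\tau$. $F_\tau[a,b]$ is the subgroup of elements of $F_\tau$ that are the identity outside $[a,b]$; $F_\tau'[a,b]$ is the commutator subgroup of $F_\tau[a,b]$; $F_\tau^c[a,b]$ is the subgroup of elements of $F_\tau[a,b]$ whose support is contained in $[a+\varepsilon,b-\varepsilon]$ for some $\varepsilon>0$. *)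

(* Defs.v *)
From Stdlib Require Import Reals ZArith.
Open Scope R_scope.

Definition tau : R := (sqrt 5 - 1) / 2.

Definition in_Ztau (x : R) : Prop := exists p q : Z, x = IZR p + IZR q * tau.

(* Elements of F_tau, represented as maps R -> R that are the identity
   outside [0,1].  Such an f is
   an orientation-preserving PL homeomorphism of [0,1] with breakpoints in
   Z[tau] and slopes integer powers of tau, and conversely. *)
Definition is_Ftau (f : R -> R) : Prop :=
  (forall x, (x < 0 \/ 1 < x) -> f x = x) /\
  f 0 = 0 /\ f 1 = 1 /\
  exists (n : nat) (xs : nat -> R) (ks : nat -> Z),
    xs 0%nat = 0 /\ xs n = 1 /\
    (forall i, (i < n)%nat -> xs i < xs (S i)) /\
    (forall i, (i <= n)%nat -> in_Ztau (xs i)) /\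
    (forall i, (i < n)%nat -> forall y, xs i <= y <= xs (S i) ->
        f y = f (xs i) + powerRZ tau (ks i) * (y - xs i)).

Definition is_Ftau_ab (a b : R) (f : R -> R) : Prop :=
  is_Ftau f /\ forall x, (x < a \/ b < x) -> f x = x.

Definition is_Ftau_c (a b : R) (f : R -> R) : Prop :=
  is_Ftau_ab a b f /\
  exists eps, 0 < eps /\ forall x, f x <> x -> a + eps <= x <= b - eps.

Definition is_commutator (G : (R -> R) -> Prop) (c : R -> R) : Prop :=
  exists g h gi hi : R -> R,
    G g /\ G h /\ G gi /\ G hi /\
    (forall x, gi (g x) = x) /\ (forall x, g (gi x) = x) /\
    (forall x, hi (h x) = x) /\ (forall x, h (hi x) = x) /\
    c = (fun x => gi (hi (g (h x)))).

Inductive gen (S : (R -> R) -> Prop) : (R -> R) -> Prop :=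
| gen_id : gen S (fun x => x)
| gen_base : forall f, S f -> gen S f
| gen_comp : forall f g, gen S f -> gen S g -> gen S (fun x => f (g x))
| gen_inv : forall f g, gen S f -> (forall x, g (f x) = x) ->
    (forall x, f (g x) = x) -> gen S g.

Definition in_Ftau' (f : R -> R) : Prop := gen (is_commutator is_Ftau) f.
Definition in_Ftau'_ab (a b : R) (f : R -> R) : Prop :=
  gen (is_commutator (is_Ftau_ab a b)) f.

(* Main.v *)
Require Import Defs.
From Stdlib Require Import Reals ZArith Lra Lia List Classical ClassicalEpsilon FunctionalExtensionality.
Open Scope R_scope.

Lemma sqrt5_facts : sqrt 5 * sqrt 5 = 5 /\ 2 < sqrt 5 < 3.
Proof.
  assert (H : sqrt 5 * sqrt 5 = 5) by (apply sqrt_sqrt; lra).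
  assert (H0 : 0 <= sqrt 5) by apply sqrt_pos.
  split; [exact H|]. split; nra.
Qed.

Lemma tau_pos : 0 < tau.
Proof. unfold tau; pose proof sqrt5_facts; lra. Qed.
Lemma tau_lt1 : tau < 1.
Proof. unfold tau; pose proof sqrt5_facts; lra. Qed.
Lemma tau_sq : tau * tau = 1 - tau.
Proof. unfold tau; pose proof sqrt5_facts as [H _]. nra. Qed.
Lemma tau_neq0 : tau <> 0.
Proof. pose proof tau_pos; lra. Qed.

Lemma Zt_IZR z : in_Ztau (IZR z).
Proof. exists z, 0%Z. ring. Qed.
Lemma Zt_0 : in_Ztau 0.
Proof. exact (Zt_IZR 0). Qed.
Lemma Zt_1 : in_Ztau 1.
Proof. exact (Zt_IZR 1). Qed.
Lemma Zt_tau : in_Ztau tau.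
Proof. exists 0%Z, 1%Z. ring. Qed.
Lemma Zt_add x y : in_Ztau x -> in_Ztau y -> in_Ztau (x + y).
Proof. intros [p [q ->]] [r [s ->]]. exists (p + r)%Z, (q + s)%Z. rewrite !plus_IZR. ring. Qed.
Lemma Zt_opp x : in_Ztau x -> in_Ztau (- x).
Proof. intros [p [q ->]]. exists (- p)%Z, (- q)%Z. rewrite !opp_IZR. ring. Qed.
Lemma Zt_sub x y : in_Ztau x -> in_Ztau y -> in_Ztau (x - y).
Proof. intros. unfold Rminus. apply Zt_add; auto. apply Zt_opp; auto. Qed.
Lemma Zt_mul x y : in_Ztau x -> in_Ztau y -> in_Ztau (x * y).
Proof.
  intros [p [q ->]] [r [s ->]]. exists (p*r + q*s)%Z, (p*s + q*r - q*s)%Z.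
  rewrite !minus_IZR, !plus_IZR, !mult_IZR.
  replace ((IZR p + IZR q * tau) * (IZR r + IZR s * tau)) with
    (IZR p * IZR r + (IZR p * IZR s + IZR q * IZR r) * tau + IZR q * IZR s * (tau*tau)) by ring.
  rewrite tau_sq. ring.
Qed.
Lemma tau_inv : / tau = 1 + tau.
Proof. pose proof tau_sq; pose proof tau_pos. field_simplify_eq; lra. Qed.
Lemma Zt_pow n : in_Ztau (tau ^ n).
Proof. induction n; simpl. apply Zt_1. apply Zt_mul; auto using Zt_tau. Qed.
Lemma Zt_powinv n : in_Ztau ((/ tau) ^ n).
Proof. induction n; simpl. apply Zt_1. apply Zt_mul; auto. rewrite tau_inv. apply Zt_add; auto using Zt_1, Zt_tau. Qed.
Lemma Zt_powerRZ k : in_Ztau (powerRZ tau k).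
Proof.
  destruct k; simpl. apply Zt_1. apply Zt_pow.
  rewrite <- pow_inv. apply Zt_powinv.
Qed.
Definition affine_on (f : R -> R) u v := exists k : Z, forall y, u <= y <= v -> f y = f u + powerRZ tau k * (y - u).
Definition LPL lo hi (S : list R) (f : R -> R) := forall u v, lo <= u -> u < v -> v <= hi ->
  (forall s, In s S -> ~ (u < s < v)) -> affine_on f u v.

Lemma LPL_ext lo hi S f1 f : LPL lo hi S f1 -> (forall y, lo <= y <= hi -> f y = f1 y) -> LPL lo hi S f.
Proof.
  intros H E u v H1 H2 H3 H4. destruct (H u v H1 H2 H3 H4) as [k Hk]. exists k. intros y Hy.
  rewrite (E y) by lra. rewrite (E u) by lra. apply Hk; auto.
Qed.

Lemma LPL_id lo hi : LPL lo hi nil (fun y => y).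
Proof. intros u v _ _ _ _. exists 0%Z. intros y _. simpl. ring. Qed.

Lemma LPL_glue lo m hi S1 S2 f1 f2 f : LPL lo m S1 f1 -> LPL m hi S2 f2 ->
  (forall y, lo <= y <= m -> f y = f1 y) -> (forall y, m <= y <= hi -> f y = f2 y) ->
  LPL lo hi (m :: S1 ++ S2) f.
Proof.
  intros H1 H2 E1 E2 u v Hu Huv Hv Hs.
  destruct (Rle_dec v m).
  - apply (LPL_ext lo m S1 f1 f H1 E1); try lra. intros s Hin. apply Hs. right. apply in_or_app. auto.
  - destruct (Rle_dec m u).
    + apply (LPL_ext m hi S2 f2 f H2 E2); try lra. intros s Hin. apply Hs. right. apply in_or_app. auto.
    + exfalso. apply (Hs m). left; auto. lra.
Qed.

Lemma LPL_comp lo1 hi1 lo2 hi2 S1 S2 G F Gi :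
  LPL lo1 hi1 S1 G -> LPL lo2 hi2 S2 F ->
  (forall y, lo1 <= y <= hi1 -> lo2 <= G y <= hi2) ->
  (forall y, lo1 <= y <= hi1 -> Gi (G y) = y) ->
  LPL lo1 hi1 (S1 ++ map Gi S2) (fun y => F (G y)).
Proof.
  intros HG HF Hmap Hinv u v Hu Huv Hv Hs.
  destruct (HG u v Hu Huv Hv) as [k Hk].
  { intros s Hin. apply Hs. apply in_or_app; auto. }
  pose proof (powerRZ_lt tau k tau_pos) as Hpk.
  assert (HGv : G v = G u + powerRZ tau k * (v - u)) by (apply Hk; lra).
  assert (Hlt : G u < G v) by (rewrite HGv; nra).
  destruct (HF (G u) (G v)) as [l Hl].
  - apply Hmap; lra.
  - exact Hlt.
  - apply Hmap; lra.
  - intros s Hin Hs'.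
    assert (Hb : (s - G u) / powerRZ tau k < v - u).
    { apply (Rmult_lt_reg_r (powerRZ tau k)). lra. unfold Rdiv. rewrite Rmult_assoc, Rinv_l by lra.
      rewrite HGv in Hs'. lra. }
    assert (Hb0 : 0 < (s - G u) / powerRZ tau k) by (apply Rdiv_lt_0_compat; lra).
    set (y := u + (s - G u) / powerRZ tau k).
    assert (Hy1 : u < y) by (unfold y; lra).
    assert (Hy2 : y < v) by (unfold y; lra).
    assert (HGy : G y = s).
    { rewrite Hk by lra. unfold y. field. lra. }
    apply (Hs y). apply in_or_app. right. rewrite <- (Hinv y) by lra. rewrite HGy. apply in_map. exact Hin.
    lra.
  - exists (l + k)%Z. intros y Hy. rewrite Hl. rewrite (Hk y Hy). rewrite powerRZ_add by exact tau_neq0. ring.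
    rewrite (Hk y Hy). assert (0 <= powerRZ tau k * (y - u)) by (apply Rmult_le_pos; lra).
    assert (powerRZ tau k * (y - u) <= powerRZ tau k * (v - u)) by (apply Rmult_le_compat_l; lra).
    split. lra. rewrite HGv. lra.
Qed.
Lemma find_interval (xs : nat -> R) n y : (forall i, (i < n)%nat -> xs i < xs (S i)) ->
  xs 0%nat <= y < xs n -> exists i, (i < n)%nat /\ xs i <= y < xs (S i).
Proof.
  induction n; intros Hinc Hy.
  - lra.
  - destruct (Rlt_le_dec y (xs n)).
    + destruct IHn as [i [Hi1 Hi2]]. intros i Hi; apply Hinc; lia. lra.
      exists i; split; auto; lia.
    + exists n; split; [lia | lra].
Qed.

Lemma incr_lt (xs : nat -> R) n : (forall i, (i < n)%nat -> xs i < xs (S i)) ->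
  forall i j, (i < j)%nat -> (j <= n)%nat -> xs i < xs j.
Proof.
  intros Hinc i j Hij Hjn. induction j. lia.
  destruct (Nat.eq_dec i j). subst. apply Hinc; lia.
  apply Rlt_trans with (xs j). apply IHj; lia. apply Hinc; lia.
Qed.

Lemma incr_le (xs : nat -> R) n : (forall i, (i < n)%nat -> xs i < xs (S i)) ->
  forall i j, (i <= j)%nat -> (j <= n)%nat -> xs i <= xs j.
Proof.
  intros Hinc i j Hij Hjn. destruct (Nat.eq_dec i j). subst; lra.
  left. apply (incr_lt xs n); auto; lia.
Qed.

Lemma Ftau_LPL g : is_Ftau g -> exists S, (forall s, In s S -> in_Ztau s) /\ LPL 0 1 S g.
Proof.
  intros [_ [_ [_ [n [xs [ks [H0 [Hn [Hinc [HZ Haff]]]]]]]]]].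
  exists (map xs (seq 0 (S n))). split.
  - intros s Hin. apply in_map_iff in Hin as [i [<- Hi]]. apply in_seq in Hi. apply HZ. lia.
  - intros u v Hu Huv Hv Hs.
    destruct (find_interval xs n u Hinc) as [i [Hi [Hi1 Hi2]]]. lra.
    assert (Hvi : v <= xs (S i)).
    { destruct (Rle_dec v (xs (S i))); auto. exfalso. apply (Hs (xs (S i))).
      apply in_map. apply in_seq. lia. lra. }
    exists (ks i). intros y Hy. rewrite (Haff i Hi y) by lra. rewrite (Haff i Hi u) by lra. ring.
Qed.

Lemma Ftau_Ztau g : is_Ftau g -> forall y, in_Ztau y -> in_Ztau (g y).
Proof.
  intros [Hout [Hg0 [Hg1 [n [xs [ks [H0 [Hn [Hinc [HZ Haff]]]]]]]]]] y Hy.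
  destruct (Rlt_le_dec y 0). rewrite Hout; auto.
  destruct (Rlt_le_dec 1 y). rewrite Hout; auto.
  destruct (Req_dec y 1). subst. rewrite Hg1. apply Zt_1.
  assert (Hxs : forall i, (i <= n)%nat -> in_Ztau (g (xs i))).
  { induction i; intros Hi. rewrite H0, Hg0. apply Zt_0.
    assert (Hlt : xs i < xs (S i)) by (apply Hinc; lia).
    rewrite (Haff i) by (lia || lra).
    apply Zt_add. apply IHi; lia. apply Zt_mul. apply Zt_powerRZ. apply Zt_sub; apply HZ; lia. }
  destruct (find_interval xs n y Hinc) as [i [Hi [Hi1 Hi2]]]. lra.
  rewrite (Haff i Hi y) by lra. apply Zt_add. apply Hxs; lia. apply Zt_mul. apply Zt_powerRZ. apply Zt_sub; auto. apply HZ; lia.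
Qed.

Lemma sort_part (L : list R) : exists n (xs : nat -> R), xs 0%nat = 0 /\ xs n = 1 /\
  (forall i, (i < n)%nat -> xs i < xs (S i)) /\
  (forall i, (i <= n)%nat -> xs i = 0 \/ xs i = 1 \/ In (xs i) L) /\
  (forall s, In s L -> 0 < s < 1 -> exists i, (i <= n)%nat /\ xs i = s).
Proof.
  induction L as [|s L IH].
  - exists 1%nat, (fun i => if Nat.eq_dec i 0 then 0 else 1). simpl. repeat split.
    + intros i Hi. destruct (Nat.eq_dec i 0); destruct (Nat.eq_dec (S i) 0); try lia; lra.
    + intros i _. destruct (Nat.eq_dec i 0); auto.
    + intros s [].
  - destruct IH as [n [xs [H0 [Hn [Hinc [Hmem Hcov]]]]]].
    destruct (classic (s <= 0 \/ 1 <= s \/ exists i, (i <= n)%nat /\ xs i = s)) as [Hc|Hc].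
    + exists n, xs. repeat split; auto.
      * intros i Hi. destruct (Hmem i Hi) as [?|[?|?]]; auto. right; right; right; auto.
      * intros s' [<-|Hin] Hs'. destruct Hc as [?|[?|?]]; auto; lra. auto.
    + assert (Hs0 : 0 < s) by (apply Rnot_le_lt; intro; apply Hc; auto).
      assert (Hs1 : s < 1) by (apply Rnot_le_lt; intro; apply Hc; auto).
      destruct (find_interval xs n s Hinc) as [i [Hi [Hi1 Hi2]]]. lra.
      assert (Hi1' : xs i < s).
      { destruct Hi1; auto. exfalso. apply Hc. right; right. exists i; split; auto; lia. }
      exists (S n), (fun j => if le_lt_dec j i then xs j else if Nat.eq_dec j (S i) then s else xs (j - 1)%nat).
      repeat split.
      * simpl. destruct (le_lt_dec 0 i); [auto|lia].
      * destruct (le_lt_dec (S n) i); [lia|]. destruct (Nat.eq_dec (S n) (S i)); [lia|].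
        replace (S n - 1)%nat with n by lia. auto.
      * intros j Hj. destruct (le_lt_dec j i); destruct (le_lt_dec (S j) i).
        -- apply Hinc; lia.
        -- destruct (Nat.eq_dec (S j) (S i)); [|lia]. assert (j = i) by lia. subst. auto.
        -- lia.
        -- destruct (Nat.eq_dec j (S i)); destruct (Nat.eq_dec (S j) (S i)); try lia.
           ++ subst. replace (S (S i) - 1)%nat with (S i) by lia. auto.
           ++ replace (S j - 1)%nat with j by lia. replace j with (S (j - 1)) at 2 by lia. apply Hinc. lia.
      * intros j Hj. destruct (le_lt_dec j i).
        -- destruct (Hmem j) as [?|[?|?]]; try lia; auto. right; right; right; auto.
        -- destruct (Nat.eq_dec j (S i)). right; right; left; auto.
           destruct (Hmem (j-1)%nat) as [?|[?|?]]; try lia; auto. right; right; right; auto.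
      * intros s' [<-|Hin] Hs'.
        -- exists (S i). split. lia. destruct (le_lt_dec (S i) i); [lia|]. destruct (Nat.eq_dec (S i) (S i)); [auto|lia].
        -- destruct (Hcov s' Hin Hs') as [k [Hk Hxk]].
           destruct (le_lt_dec k i).
           ++ exists k. split. lia. destruct (le_lt_dec k i); [auto|lia].
           ++ exists (S k). split. lia. destruct (le_lt_dec (S k) i); [lia|]. destruct (Nat.eq_dec (S k) (S i)); [lia|].
              replace (S k - 1)%nat with k by lia. auto.
Qed.

Lemma LPL_Ftau f L : (forall x, (x < 0 \/ 1 < x) -> f x = x) -> f 0 = 0 -> f 1 = 1 ->
  (forall s, In s L -> in_Ztau s) -> LPL 0 1 L f -> is_Ftau f.
Proof.
  intros Hout H0 H1 HZ HL. split; [auto|split; [auto|split; [auto|]]].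
  destruct (sort_part L) as [n [xs [Hx0 [Hxn [Hinc [Hmem Hcov]]]]]].
  set (P := fun i k => forall y, xs i <= y <= xs (S i) -> f y = f (xs i) + powerRZ tau k * (y - xs i)).
  exists n, xs, (fun i => epsilon (inhabits 0%Z) (P i)).
  assert (Hrange : forall i, (i <= n)%nat -> 0 <= xs i <= 1).
  { intros i Hi. rewrite <- Hx0, <- Hxn. split; apply (incr_le xs n); auto; lia. }
  repeat split; auto.
  - intros i Hi. destruct (Hmem i Hi) as [->|[->|?]]. apply Zt_0. apply Zt_1. auto.
  - intros i Hi. apply (epsilon_spec (inhabits 0%Z) (P i)).
    apply (HL (xs i) (xs (S i))). apply Hrange; lia. apply Hinc; auto. apply Hrange; lia.
    intros s Hin [Hs1 Hs2].
    assert (Hs : 0 < s < 1).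
    { pose proof (Hrange i ltac:(lia)). pose proof (Hrange (S i) ltac:(lia)). lra. }
    destruct (Hcov s Hin Hs) as [k [Hk <-]].
    destruct (le_lt_dec k i).
    + pose proof (incr_le xs n Hinc k i ltac:(lia) ltac:(lia)). lra.
    + pose proof (incr_le xs n Hinc (S i) k ltac:(lia) ltac:(lia)). lra.
Qed.
Lemma discrete_step (P : nat -> Prop) N : P N -> ~ P 0%nat -> exists n, ~ P n /\ P (S n).
Proof.
  induction N; intros HN H0. contradiction.
  destruct (classic (P N)). apply IHN; auto. exists N; auto.
Qed.

Lemma pR1 : powerRZ tau 1 = tau.
Proof. simpl. ring. Qed.
Lemma pR2 : powerRZ tau 2 = tau * tau.
Proof. simpl. ring. Qed.
Lemma pRS j : powerRZ tau (j + 1) = powerRZ tau j * tau.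
Proof. rewrite powerRZ_add by exact tau_neq0. rewrite pR1. ring. Qed.
Lemma pRSS j : powerRZ tau (j + 2) = powerRZ tau j * (tau * tau).
Proof. rewrite powerRZ_add by exact tau_neq0. rewrite pR2. ring. Qed.

Lemma exists_m r : 0 < r -> exists m : Z, powerRZ tau m < r <= powerRZ tau (m - 1).
Proof.
  intros Hr.
  assert (Ht : Rabs tau < 1) by (rewrite Rabs_pos_eq; pose proof tau_pos; pose proof tau_lt1; lra).
  destruct (pow_lt_1_zero tau Ht r Hr) as [M HM].
  assert (Hr' : 0 < / r) by (apply Rinv_0_lt_compat; auto).
  destruct (pow_lt_1_zero tau Ht (/ r) Hr') as [K HK].
  set (P := fun n : nat => powerRZ tau (Z.of_nat n - Z.of_nat K) < r).
  destruct (discrete_step P (M + K)) as [n [Hn HSn]].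
  - unfold P. replace (Z.of_nat (M + K) - Z.of_nat K)%Z with (Z.of_nat M) by lia.
    rewrite <- pow_powerRZ. specialize (HM M (le_n _)). rewrite Rabs_pos_eq in HM; auto.
    apply pow_le. pose proof tau_pos; lra.
  - unfold P. simpl. replace (0 - Z.of_nat K)%Z with (- Z.of_nat K)%Z by lia.
    rewrite powerRZ_neg', <- pow_powerRZ. specialize (HK K (le_n _)).
    assert (0 < tau ^ K) by (apply pow_lt; exact tau_pos).
    rewrite Rabs_pos_eq in HK by lra. intro Hc.
    assert (1 < r * tau ^ K).
    { apply (Rmult_lt_reg_r (/ tau ^ K)). apply Rinv_0_lt_compat; auto.
      rewrite Rmult_assoc, Rinv_r by lra. lra. }
    apply (Rmult_lt_compat_l r) in HK; auto. rewrite Rinv_r in HK by lra. lra.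
  - exists (Z.of_nat (S n) - Z.of_nat K)%Z. split. exact HSn.
    unfold P in Hn. replace (Z.of_nat (S n) - Z.of_nat K - 1)%Z with (Z.of_nat n - Z.of_nat K)%Z by lia. lra.
Qed.

Lemma twopiece L L' : 0 < L -> 0 < L' -> in_Ztau L -> in_Ztau L' ->
  exists x j, 0 < x < L /\ in_Ztau x /\ powerRZ tau j * x + powerRZ tau (j + 2) * (L - x) = L'.
Proof.
  intros HL HL' ZL ZL'.
  destruct (exists_m (L' / L)) as [m [Hm1 Hm2]]. apply Rdiv_lt_0_compat; auto.
  set (j := (m - 2)%Z).
  replace m with (j + 2)%Z in Hm1 by (unfold j; lia).
  replace (m - 1)%Z with (j + 1)%Z in Hm2 by (unfold j; lia).
  rewrite pRSS in Hm1. rewrite pRS in Hm2.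
  set (T := powerRZ tau j) in *.
  assert (HT : 0 < T) by (apply powerRZ_lt; exact tau_pos).
  pose proof tau_pos as Tp. pose proof tau_lt1 as Tl. pose proof tau_sq as Ts.
  assert (H1 : T * (tau * tau) * L < L').
  { apply (Rmult_lt_compat_r L) in Hm1; auto. replace (L' / L * L) with L' in Hm1 by (field; lra). lra. }
  assert (H2 : L' <= T * tau * L).
  { apply (Rmult_le_compat_r L) in Hm2; [|lra]. replace (L' / L * L) with L' in Hm2 by (field; lra). lra. }
  assert (HTt : 0 < T * tau) by (apply Rmult_lt_0_compat; auto).
  exists ((L' - T * (tau * tau) * L) / (T * tau)), j.
  split; [split|split].
  - apply Rdiv_lt_0_compat; lra.
  - apply (Rmult_lt_reg_r (T * tau)); auto. replace ((L' - T * (tau * tau) * L) / (T * tau) * (T * tau)) with (L' - T * (tau * tau) * L) by (field; lra).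
    assert (T * tau * L < T * L) by (apply Rmult_lt_compat_r; auto; nra).
    assert (T * (tau * tau) * L = T * L - T * tau * L) by (rewrite Ts; ring).
    nra.
  - unfold Rdiv. apply Zt_mul. apply Zt_sub; auto. apply Zt_mul; auto.
    unfold T. rewrite <- pRSS. apply Zt_powerRZ.
    unfold T. rewrite <- pRS. rewrite <- powerRZ_neg'. apply Zt_powerRZ.
  - rewrite pRSS. fold T. field_simplify_eq; [|lra]. 
    replace (tau * tau) with (1 - tau) by lra. ring_simplify. nra.
Qed.
Definition kink (x0 y0 s s' : R) (y : R) : R :=
  if Rle_dec y x0 then y0 + s * (y - x0) else y0 + s' * (y - x0).

Lemma kink_left x0 y0 s s' y : y <= x0 -> kink x0 y0 s s' y = y0 + s * (y - x0).
Proof. intros H. unfold kink. destruct (Rle_dec y x0); [auto|contradiction]. Qed.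
Lemma kink_right x0 y0 s s' y : x0 <= y -> kink x0 y0 s s' y = y0 + s' * (y - x0).
Proof. intros H. unfold kink. destruct (Rle_dec y x0). replace y with x0 by lra. ring. auto. Qed.
Lemma kink_at x0 y0 s s' : kink x0 y0 s s' x0 = y0.
Proof. rewrite kink_left by lra. ring. Qed.

Lemma kink_mono x0 y0 s s' y z : 0 < s -> 0 < s' -> y < z -> kink x0 y0 s s' y < kink x0 y0 s s' z.
Proof.
  intros Hs Hs' Hyz. destruct (Rle_dec z x0).
  - rewrite !kink_left by lra. nra.
  - destruct (Rle_dec y x0).
    + rewrite kink_left by lra. rewrite kink_right by lra. nra.
    + rewrite !kink_right by lra. nra.
Qed.

Lemma kink_inv x0 y0 s s' y : 0 < s -> 0 < s' ->
  kink y0 x0 (/ s) (/ s') (kink x0 y0 s s' y) = y.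
Proof.
  intros Hs Hs'. destruct (Rle_dec y x0).
  - rewrite (kink_left x0) by lra. rewrite kink_left by nra. field. lra.
  - rewrite (kink_right x0) by lra. rewrite kink_right by nra. field. lra.
Qed.

Lemma kink_LPL lo hi x0 y0 k k' : LPL lo hi (x0 :: nil) (kink x0 y0 (powerRZ tau k) (powerRZ tau k')).
Proof.
  intros u v Hu Huv Hv Hs. destruct (Rle_dec v x0).
  - exists k. intros y Hy. rewrite !kink_left by lra. ring.
  - destruct (Rle_dec x0 u).
    + exists k'. intros y Hy. rewrite !kink_right by lra. ring.
    + exfalso. apply (Hs x0). left; auto. lra.
Qed.

Lemma kink_Z x0 y0 s s' y : in_Ztau x0 -> in_Ztau y0 -> in_Ztau s -> in_Ztau s' -> in_Ztau y ->
  in_Ztau (kink x0 y0 s s' y).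
Proof.
  intros. unfold kink. destruct (Rle_dec y x0); apply Zt_add; auto; apply Zt_mul; auto; apply Zt_sub; auto.
Qed.
Definition psi3 (c d : R) (K1 K2 : R -> R) (y : R) : R :=
  if Rle_dec y c then K1 y else if Rle_dec y d then y else K2 y.

Definition smono (K : R -> R) := forall y z, y < z -> K y < K z.

Lemma smono_le K y z : smono K -> y <= z -> K y <= K z.
Proof. intros H Hyz. destruct Hyz. left; auto. subst; lra. Qed.

Lemma smono_le_iff K y z : smono K -> (K y <= K z <-> y <= z).
Proof.
  intros H. split; intros Hle. destruct (Rle_dec y z); auto. exfalso.
  assert (K z < K y) by (apply H; lra). lra. apply smono_le; auto.
Qed.

Lemma psi3_c c d K1 K2 y : y <= c -> psi3 c d K1 K2 y = K1 y.
Proof. intros. unfold psi3. destruct (Rle_dec y c); [auto|contradiction]. Qed.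
Lemma psi3_m c d K1 K2 y : c < y -> y <= d -> psi3 c d K1 K2 y = y.
Proof. intros. unfold psi3. destruct (Rle_dec y c); [lra|]. destruct (Rle_dec y d); [auto|contradiction]. Qed.
Lemma psi3_d c d K1 K2 y : d < y -> c < d -> psi3 c d K1 K2 y = K2 y.
Proof. intros. unfold psi3. destruct (Rle_dec y c); [lra|]. destruct (Rle_dec y d); [lra|auto]. Qed.

Lemma psi3_inv c d K1 K2 K1i K2i : c < d -> smono K1 -> smono K2 ->
  K1 c = c -> K2 d = d -> (forall y, K1i (K1 y) = y) -> (forall y, K2i (K2 y) = y) ->
  forall y, psi3 c d K1i K2i (psi3 c d K1 K2 y) = y.
Proof.
  intros Hcd M1 M2 E1 E2 I1 I2 y.
  destruct (Rle_dec y c).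
  - rewrite (psi3_c c d K1 K2 y r). rewrite psi3_c. auto. transitivity (K1 c). apply smono_le; auto. lra.
  - destruct (Rle_dec y d).
    + rewrite (psi3_m c d K1 K2 y) by lra. rewrite psi3_m by lra. auto.
    + rewrite (psi3_d c d K1 K2) by lra. rewrite psi3_d; auto. rewrite <- E2. apply M2. lra.
Qed.

Lemma inv_smono K Ki : smono K -> (forall y, K (Ki y) = y) -> smono Ki.
Proof.
  intros M I y z Hyz. destruct (Rlt_le_dec (Ki y) (Ki z)); auto. exfalso.
  assert (K (Ki z) <= K (Ki y)) by (apply smono_le; auto). rewrite !I in H. lra.
Qed.
Lemma psi3_LPL lo hi c d K1 K2 S1 S2 : lo <= c -> c < d -> d <= hi -> K1 c = c -> K2 d = d ->
  LPL lo c S1 K1 -> LPL d hi S2 K2 -> LPL lo hi (c :: S1 ++ (d :: nil ++ S2)) (psi3 c d K1 K2).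
Proof.
  intros H1 H2 H3 E1 E2 L1 L2.
  apply LPL_glue with (f1 := K1) (f2 := fun y => if Rle_dec y d then y else K2 y); auto.
  - apply LPL_glue with (f1 := fun y => y) (f2 := K2). apply LPL_id. auto.
    intros y Hy. destruct (Rle_dec y d); [auto|lra].
    intros y Hy. destruct (Rle_dec y d). replace y with d by lra. auto. auto.
  - intros y Hy. apply psi3_c; lra.
  - intros y Hy. destruct (Rle_dec y c).
    + replace y with c by lra. rewrite psi3_c by lra. destruct (Rle_dec c d); [auto|lra].
    + destruct (Rle_dec y d). apply psi3_m; lra. apply psi3_d; lra.
Qed.

Lemma kink_smono x0 y0 k k' : smono (kink x0 y0 (powerRZ tau k) (powerRZ tau k')).
Proof. intros y z H. apply kink_mono; auto; apply powerRZ_lt; exact tau_pos. Qed.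

Lemma kink_inv_pR x0 y0 k k' y :
  kink y0 x0 (powerRZ tau (- k)) (powerRZ tau (- k')) (kink x0 y0 (powerRZ tau k) (powerRZ tau k') y) = y.
Proof. rewrite !powerRZ_neg'. apply kink_inv; apply powerRZ_lt; exact tau_pos. Qed.

Lemma kink_inv_pR' x0 y0 k k' y :
  kink x0 y0 (powerRZ tau k) (powerRZ tau k') (kink y0 x0 (powerRZ tau (- k)) (powerRZ tau (- k')) y) = y.
Proof.
  pose proof (kink_inv_pR y0 x0 (- k) (- k') y) as H. rewrite !Z.opp_involutive in H. exact H.
Qed.

Lemma psi_exists a b eps : in_Ztau a -> in_Ztau b -> 0 < a -> a < b -> b < 1 -> 0 < eps ->
  exists (psi psinv : R -> R) c d Sp Si,
  a < c <= a + eps /\ b - eps <= d < b /\ c < d /\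
  (forall y, psinv (psi y) = y) /\ (forall y, psi (psinv y) = y) /\
  psi 0 = a /\ psi 1 = b /\
  (forall y, 0 <= y <= 1 -> a <= psi y <= b) /\
  (forall y, a <= y <= b -> 0 <= psinv y <= 1) /\
  (forall y, c <= y <= d -> psi y = y /\ psinv y = y) /\
  (forall y, y < c -> psinv y < c) /\ (forall y, d < y -> d < psinv y) /\
  (forall y, in_Ztau y -> in_Ztau (psi y)) /\
  (forall s, In s Sp -> in_Ztau s) /\ (forall s, In s Si -> in_Ztau s) /\
  LPL 0 1 Sp psi /\ LPL a b Si psinv.
Proof.
  intros Za Zb Ha Hab Hb He.
  assert (Ht : Rabs tau < 1) by (rewrite Rabs_pos_eq; pose proof tau_pos; pose proof tau_lt1; lra).
  assert (Hm : 0 < Rmin eps ((b - a) / 3)) by (apply Rmin_pos; lra).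
  destruct (pow_lt_1_zero tau Ht _ Hm) as [N HN]. specialize (HN N (le_n _)).
  set (t := tau ^ N) in *.
  assert (Ht0 : 0 < t) by (apply pow_lt; exact tau_pos).
  rewrite Rabs_pos_eq in HN by lra.
  pose proof (Rmin_l eps ((b - a) / 3)). pose proof (Rmin_r eps ((b - a) / 3)).
  assert (Zt : in_Ztau t) by apply Zt_pow.
  set (c := a + t). set (d := b - t).
  assert (Zc : in_Ztau c) by (apply Zt_add; auto).
  assert (Zd : in_Ztau d) by (apply Zt_sub; auto).
  destruct (twopiece c t) as [x1 [j1 [Hx1 [Zx1 E1]]]]; auto. unfold c; lra.
  destruct (twopiece (1 - d) t) as [x2 [j2 [Hx2 [Zx2 E2]]]]; auto. unfold d; lra. apply Zt_sub; auto. apply Zt_1.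
  set (p1 := a + powerRZ tau j1 * x1). set (p2 := d + powerRZ tau j2 * x2).
  set (K1 := kink x1 p1 (powerRZ tau j1) (powerRZ tau (j1 + 2))).
  set (K1i := kink p1 x1 (powerRZ tau (- j1)) (powerRZ tau (- (j1 + 2)))).
  set (K2 := kink (d + x2) p2 (powerRZ tau j2) (powerRZ tau (j2 + 2))).
  set (K2i := kink p2 (d + x2) (powerRZ tau (- j2)) (powerRZ tau (- (j2 + 2)))).
  assert (M1 : smono K1) by apply kink_smono.
  assert (M2 : smono K2) by apply kink_smono.
  assert (M1i : smono K1i) by apply kink_smono.
  assert (M2i : smono K2i) by apply kink_smono.
  assert (I1 : forall y, K1i (K1 y) = y) by (intros; apply kink_inv_pR).
  assert (I2 : forall y, K2i (K2 y) = y) by (intros; apply kink_inv_pR).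
  assert (I1' : forall y, K1 (K1i y) = y) by (intros; apply kink_inv_pR').
  assert (I2' : forall y, K2 (K2i y) = y) by (intros; apply kink_inv_pR').
  assert (EK1c : K1 c = c).
  { unfold K1. rewrite kink_right by lra. unfold p1, c in *. lra. }
  assert (EK10 : K1 0 = a).
  { unfold K1. rewrite kink_left by lra. unfold p1. ring. }
  assert (EK2d : K2 d = d).
  { unfold K2. rewrite kink_left by lra. unfold p2. ring. }
  assert (EK21 : K2 1 = b).
  { unfold K2. rewrite kink_right by lra. unfold p2, d in *. lra. }
  assert (EK1ic : K1i c = c) by (rewrite <- EK1c at 1; apply I1).
  assert (EK2id : K2i d = d) by (rewrite <- EK2d at 1; apply I2).
  assert (EK1ia : K1i a = 0) by (rewrite <- EK10; apply I1).
  assert (EK2ib : K2i b = 1) by (rewrite <- EK21; apply I2).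
  assert (Hcd : c < d) by (unfold c, d; lra).
  assert (Hac : a < c) by (unfold c; lra). assert (Hdb : d < b) by (unfold d; lra).
  assert (Hce : c <= a + eps) by (unfold c; lra). assert (Hde : b - eps <= d) by (unfold d; lra).
  assert (Hx1c : x1 < c) by lra. assert (Hx2d : d + x2 < 1) by lra.
  assert (Hp1 : 0 < powerRZ tau j1 * x1) by (apply Rmult_lt_0_compat; [apply powerRZ_lt; exact tau_pos | lra]).
  assert (Hp2 : 0 < powerRZ tau j2 * x2) by (apply Rmult_lt_0_compat; [apply powerRZ_lt; exact tau_pos | lra]).
  exists (psi3 c d K1 K2), (psi3 c d K1i K2i), c, d,
    (c :: (x1 :: nil) ++ (d :: nil ++ (d + x2 :: nil))),
    (c :: (p1 :: nil) ++ (d :: nil ++ (p2 :: nil))).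
  split; [unfold c; lra|]. split; [unfold d; lra|]. split; [auto|].
  split; [apply psi3_inv; auto|].
  split; [apply psi3_inv; auto|].
  split; [rewrite psi3_c by lra; auto|].
  split; [rewrite psi3_d by lra; auto|].
  split.
  { intros y Hy. destruct (Rle_dec y c).
    - rewrite psi3_c by auto. rewrite <- EK10. split. apply smono_le; auto; lra.
      transitivity (K1 c). apply smono_le; auto. rewrite EK1c. unfold c, d in *; lra.
    - destruct (Rle_dec y d). rewrite psi3_m by lra. lra.
      rewrite psi3_d by lra. rewrite <- EK21. split. transitivity (K2 d). lra. apply smono_le; auto; lra.
      apply smono_le; auto; lra. }
  split.
  { intros y Hy. destruct (Rle_dec y c).
    - rewrite psi3_c by auto. rewrite <- EK1ia. split. apply smono_le; auto; lra.
      transitivity (K1i c). apply smono_le; auto. unfold c, d in *; lra.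
    - destruct (Rle_dec y d). rewrite psi3_m by lra. lra.
      rewrite psi3_d by lra. rewrite <- EK2ib. split. transitivity (K2i d). lra. apply smono_le; auto; lra.
      apply smono_le; auto; lra. }
  split.
  { intros y Hy. destruct (Req_dec y c).
    - subst y. rewrite !psi3_c by lra. auto.
    - rewrite !psi3_m by lra. auto. }
  split.
  { intros y Hy. rewrite psi3_c by lra. rewrite <- EK1ic. apply M1i; auto. }
  split.
  { intros y Hy. rewrite psi3_d by lra. rewrite <- EK2id at 1. apply M2i; auto. }
  split.
  { intros y Zy. unfold psi3. destruct (Rle_dec y c); [|destruct (Rle_dec y d)]; auto;
    [unfold K1 | unfold K2]; apply kink_Z; auto using Zt_powerRZ.
    unfold p1; apply Zt_add; auto; apply Zt_mul; auto using Zt_powerRZ.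
    apply Zt_add; auto.
    unfold p2; apply Zt_add; auto; apply Zt_mul; auto using Zt_powerRZ. }
  split.
  { intros s Hs. simpl in Hs. destruct Hs as [<-|[<-|[<-|[<-|[]]]]]; auto. apply Zt_add; auto. }
  split.
  { intros s Hs. simpl in Hs. destruct Hs as [<-|[<-|[<-|[<-|[]]]]]; auto.
    unfold p1; apply Zt_add; auto; apply Zt_mul; auto using Zt_powerRZ.
    unfold p2; apply Zt_add; auto; apply Zt_mul; auto using Zt_powerRZ. }
  split.
  - apply psi3_LPL; auto. lra. unfold d; lra. apply kink_LPL. apply kink_LPL.
  - apply psi3_LPL; auto. unfold c; lra. unfold d; lra. apply kink_LPL. apply kink_LPL.
Qed.
Definition Psi (a b : R) (psi psinv : R -> R) (g : R -> R) (y : R) : R :=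
  if Rle_dec a y then (if Rle_dec y b then psi (g (psinv y)) else y) else y.

Definition psi_ok a b (psi psinv : R -> R) :=
  (forall y, psinv (psi y) = y) /\ (forall y, psi (psinv y) = y) /\
  (forall y, 0 <= y <= 1 -> a <= psi y <= b) /\ (forall y, a <= y <= b -> 0 <= psinv y <= 1) /\
  psi 0 = a /\ psi 1 = b.

Definition maps01 (g : R -> R) := forall x, 0 <= x <= 1 -> 0 <= g x <= 1.
Definition out_id (g : R -> R) := forall x, (x < 0 \/ 1 < x) -> g x = x.

Lemma Psi_comp a b psi psinv g h : psi_ok a b psi psinv -> maps01 h ->
  Psi a b psi psinv (fun x => g (h x)) = (fun y => Psi a b psi psinv g (Psi a b psi psinv h y)).
Proof.
  intros [I1 [I2 [M1 [M2 _]]]] Hh. apply functional_extensionality. intros y.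
  unfold Psi at 1 3. destruct (Rle_dec a y); [destruct (Rle_dec y b)|].
  - unfold Psi. assert (Hz : a <= psi (h (psinv y)) <= b) by (apply M1, Hh, M2; lra).
    destruct (Rle_dec a (psi (h (psinv y)))); [|lra]. destruct (Rle_dec (psi (h (psinv y))) b); [|lra].
    rewrite I1. auto.
  - unfold Psi. destruct (Rle_dec a y); [|lra]. destruct (Rle_dec y b); [lra|auto].
  - unfold Psi. destruct (Rle_dec a y); [lra|auto].
Qed.

Lemma Psi_comp_pt a b psi psinv g h y : psi_ok a b psi psinv -> maps01 h ->
  Psi a b psi psinv g (Psi a b psi psinv h y) = Psi a b psi psinv (fun x => g (h x)) y.
Proof. intros H1 H2. rewrite (Psi_comp a b psi psinv g h H1 H2). reflexivity. Qed.

Lemma Psi_id a b psi psinv : psi_ok a b psi psinv -> Psi a b psi psinv (fun x => x) = (fun y => y).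
Proof.
  intros [I1 [I2 _]]. apply functional_extensionality. intros y. unfold Psi.
  destruct (Rle_dec a y); [destruct (Rle_dec y b)|]; auto.
Qed.

Lemma inv_maps01 g gi : out_id g -> out_id gi -> (forall x, gi (g x) = x) -> maps01 g.
Proof.
  intros Hg Hgi I x Hx. destruct (Rle_dec 0 (g x)); [destruct (Rle_dec (g x) 1)|].
  - lra.
  - exfalso. assert (gi (g x) = g x) by (apply Hgi; lra). rewrite I in H. lra.
  - exfalso. assert (gi (g x) = g x) by (apply Hgi; lra). rewrite I in H. lra.
Qed.

Lemma Ftau_out g : is_Ftau g -> out_id g.
Proof. intros [H _]. exact H. Qed.

Lemma Psi_H a b psi psinv Sp Si g gi : psi_ok a b psi psinv -> 0 < a -> a < b -> b < 1 ->
  (forall y, in_Ztau y -> in_Ztau (psi y)) -> (forall s, In s Sp -> in_Ztau s) -> (forall s, In s Si -> in_Ztau s) ->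
  LPL 0 1 Sp psi -> LPL a b Si psinv -> in_Ztau a -> in_Ztau b ->
  is_Ftau g -> is_Ftau gi -> (forall x, gi (g x) = x) -> (forall x, g (gi x) = x) ->
  is_Ftau_ab a b (Psi a b psi psinv g).
Proof.
  intros Hok Ha Hab Hb Zpsi ZSp ZSi Lp Li Za Zb Fg Fgi I1 I2.
  destruct Hok as [J1 [J2 [M1 [M2 [P0 P1]]]]].
  assert (Mg : maps01 g) by (apply (inv_maps01 g gi); auto using Ftau_out).
  destruct (Ftau_LPL g Fg) as [Sg [ZSg Lg]].
  pose proof Fg as [_ [g0 [g1 _]]].
  assert (L1 : LPL a b (Si ++ map psi Sg) (fun y => g (psinv y))).
  { apply (LPL_comp a b 0 1); auto. }
  assert (L2 : LPL a b ((Si ++ map psi Sg) ++ map (fun z => psi (gi z)) Sp) (fun y => psi (g (psinv y)))).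
  { apply (LPL_comp a b 0 1 _ _ (fun y => g (psinv y)) psi (fun z => psi (gi z))); auto.
    all: intros y Hy; first [rewrite I1, J2; auto | apply Mg, M2; auto]. }
  assert (Hpa : psinv a = 0) by (rewrite <- P0; auto).
  assert (Hpb : psinv b = 1) by (rewrite <- P1; auto).
  split.
  - apply (LPL_Ftau _ (a :: nil ++ (b :: ((Si ++ map psi Sg) ++ map (fun z => psi (gi z)) Sp) ++ nil))).
    + intros x Hx. unfold Psi. destruct (Rle_dec a x); [destruct (Rle_dec x b)|]; auto; lra.
    + unfold Psi. destruct (Rle_dec a 0); [lra|auto].
    + unfold Psi. destruct (Rle_dec a 1); [destruct (Rle_dec 1 b)|]; auto; lra.
    + intros s Hs. simpl in Hs. destruct Hs as [<-|[<-|Hs]]; auto.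
      rewrite app_nil_r in Hs. apply in_app_or in Hs as [Hs|Hs]. apply in_app_or in Hs as [Hs|Hs]. auto.
      apply in_map_iff in Hs as [z [<- Hz]]. auto.
      apply in_map_iff in Hs as [z [<- Hz]]. apply Zpsi. apply (Ftau_Ztau gi); auto.
    + apply LPL_glue with (f1 := fun y => y) (f2 := fun y => if Rle_dec y b then psi (g (psinv y)) else y).
      * apply LPL_id.
      * apply LPL_glue with (f1 := fun y => psi (g (psinv y))) (f2 := fun y => y). auto. apply LPL_id.
        intros y Hy. destruct (Rle_dec y b); [auto|lra].
        intros y Hy. destruct (Rle_dec y b). replace y with b by lra. rewrite Hpb, g1. auto. auto.
      * intros y Hy. unfold Psi. destruct (Rle_dec a y); [|auto]. replace y with a by lra.
        destruct (Rle_dec a b); [|lra]. rewrite Hpa, g0. auto.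
      * intros y Hy. unfold Psi. destruct (Rle_dec a y); [|lra]. auto.
  - intros x Hx. unfold Psi. destruct (Rle_dec a x); [destruct (Rle_dec x b)|]; auto; lra.
Qed.
Lemma main_ind a b psi psinv Sp Si : psi_ok a b psi psinv -> 0 < a -> a < b -> b < 1 ->
  (forall y, in_Ztau y -> in_Ztau (psi y)) -> (forall s, In s Sp -> in_Ztau s) -> (forall s, In s Si -> in_Ztau s) ->
  LPL 0 1 Sp psi -> LPL a b Si psinv -> in_Ztau a -> in_Ztau b ->
  forall f, in_Ftau' f ->
  out_id f /\ maps01 f /\ (forall x y, f x = f y -> x = y) /\ in_Ftau'_ab a b (Psi a b psi psinv f).
Proof.
  intros Hok Ha Hab Hb Zpsi ZSp ZSi Lp Li Za Zb f Hf.
  assert (HPH : forall g gi, is_Ftau g -> is_Ftau gi -> (forall x, gi (g x) = x) -> (forall x, g (gi x) = x) ->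
     is_Ftau_ab a b (Psi a b psi psinv g)) by (intros g gi H1 H2 H3 H4; apply (Psi_H a b psi psinv Sp Si g gi); auto).
  induction Hf as [|f Hc|f g Hf IHf Hg IHg|f g Hf IHf Hgf Hfg].
  - split; [intros x _; auto|]. split; [intros x Hx; auto|]. split; [auto|].
    unfold in_Ftau'_ab. rewrite Psi_id by auto. apply gen_id.
  - destruct Hc as [g [h [gi [hi [Fg [Fh [Fgi [Fhi [I1 [I2 [I3 [I4 ->]]]]]]]]]]]].
    assert (Mg : maps01 g) by (apply (inv_maps01 g gi); auto using Ftau_out).
    assert (Mh : maps01 h) by (apply (inv_maps01 h hi); auto using Ftau_out).
    assert (Mgi : maps01 gi) by (apply (inv_maps01 gi g); auto using Ftau_out).
    assert (Mhi : maps01 hi) by (apply (inv_maps01 hi h); auto using Ftau_out).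
    pose proof (Ftau_out _ Fg) as Og. pose proof (Ftau_out _ Fh) as Oh.
    pose proof (Ftau_out _ Fgi) as Ogi. pose proof (Ftau_out _ Fhi) as Ohi.
    split; [intros x Hx; rewrite Oh, Og, Ohi, Ogi; auto|].
    split; [intros x Hx; apply Mgi, Mhi, Mg, Mh; auto|].
    split; [intros x y E; cbv beta in E; apply (f_equal g) in E; rewrite !I2 in E; apply (f_equal h) in E; rewrite !I4 in E;
      apply (f_equal gi) in E; rewrite !I1 in E; apply (f_equal hi) in E; rewrite !I3 in E; exact E|].
    apply gen_base.
    assert (Pinv : forall u ui, maps01 u -> (forall x, ui (u x) = x) ->
       forall y, Psi a b psi psinv ui (Psi a b psi psinv u y) = y).
    { intros u ui Mu Iu y. rewrite (Psi_comp_pt a b psi psinv ui u y Hok Mu).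
      replace (fun x => ui (u x)) with (fun x : R => x) by (apply functional_extensionality; intros; rewrite Iu; auto).
      rewrite Psi_id by auto. auto. }
    exists (Psi a b psi psinv g), (Psi a b psi psinv h), (Psi a b psi psinv gi), (Psi a b psi psinv hi).
    split; [apply (HPH g gi); auto|]. split; [apply (HPH h hi); auto|]. split; [apply (HPH gi g); auto|]. split; [apply (HPH hi h); auto|].
    split; [intros y; apply (Pinv g gi); auto|]. split; [intros y; apply (Pinv gi g); auto|].
    split; [intros y; apply (Pinv h hi); auto|]. split; [intros y; apply (Pinv hi h); auto|].
    rewrite (Psi_comp a b psi psinv gi (fun x => hi (g (h x)))) by (auto; intros x Hx; apply Mhi, Mg, Mh; auto).
    rewrite (Psi_comp a b psi psinv hi (fun x => g (h x))) by (auto; intros x Hx; apply Mg, Mh; auto).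
    rewrite (Psi_comp a b psi psinv g h) by auto. auto.
  - destruct IHf as [Of [Mf [Jf Gf]]]. destruct IHg as [Og [Mg [Jg Gg]]].
    split; [intros x Hx; rewrite Og, Of; auto|].
    split; [intros x Hx; apply Mf, Mg; auto|].
    split; [intros x y E; apply Jg, Jf; auto|].
    unfold in_Ftau'_ab. rewrite (Psi_comp a b psi psinv f g Hok Mg). apply gen_comp; auto.
  - destruct IHf as [Of [Mf [Jf Gf]]].
    assert (Og : out_id g) by (intros x Hx; rewrite <- (Of x Hx) at 1; apply Hgf).
    assert (Mg : maps01 g) by (apply (inv_maps01 g f); auto).
    split; [auto|]. split; [auto|].
    split; [intros x y E; rewrite <- (Hfg x), <- (Hfg y), E; auto|].
    unfold in_Ftau'_ab. apply gen_inv with (Psi a b psi psinv f); auto.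
    + intros y. rewrite (Psi_comp_pt a b psi psinv g f y Hok Mf).
      replace (fun x => g (f x)) with (fun x : R => x) by (apply functional_extensionality; intros; rewrite Hgf; auto).
      rewrite Psi_id by auto. auto.
    + intros y. rewrite (Psi_comp_pt a b psi psinv f g y Hok Mg).
      replace (fun x => f (g x)) with (fun x : R => x) by (apply functional_extensionality; intros; rewrite Hfg; auto).
      rewrite Psi_id by auto. auto.
Qed.

Theorem mainTheorem16 (a b : R) :
  in_Ztau a -> in_Ztau b -> 0 < a -> a < b -> b < 1 ->
  forall f : R -> R, in_Ftau' f -> is_Ftau_c a b f -> in_Ftau'_ab a b f.
Proof.
  intros Za Zb Ha Hab Hb f Hf [[Ff Hfab] [eps [He Hsupp]]].
  destruct (psi_exists a b eps Za Zb Ha Hab Hb He) as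
    [psi [psinv [c [d [Sp [Si [Hc [Hd [Hcd [J1 [J2 [P0 [P1 [M1 [M2 [Hmid [Hlc [Hgd [Zpsi [ZSp [ZSi [Lp Li]]]]]]]]]]]]]]]]]]]]]].
  assert (Hok : psi_ok a b psi psinv) by (repeat split; auto; apply M1 || apply M2; auto).
  destruct (main_ind a b psi psinv Sp Si Hok Ha Hab Hb Zpsi ZSp ZSi Lp Li Za Zb f Hf) as [Of [Mf [Jf Gf]]].
  replace f with (Psi a b psi psinv f); [exact Gf|].
  apply functional_extensionality. intros y. unfold Psi.
  destruct (Rle_dec a y); [destruct (Rle_dec y b)|]; [| rewrite Hfab; auto; lra | rewrite Hfab; auto; lra].
  destruct (Rlt_le_dec y c).
  - assert (Hpy : psinv y < c) by auto.
    assert (E1 : f (psinv y) = psinv y).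
    { destruct (Req_dec (f (psinv y)) (psinv y)); auto. apply Hsupp in H. lra. }
    rewrite E1, J2. destruct (Req_dec (f y) y); auto. apply Hsupp in H. lra.
  - destruct (Rlt_le_dec d y).
    + assert (Hpy : d < psinv y) by auto.
      assert (E1 : f (psinv y) = psinv y).
      { destruct (Req_dec (f (psinv y)) (psinv y)); auto. apply Hsupp in H. lra. }
      rewrite E1, J2. destruct (Req_dec (f y) y); auto. apply Hsupp in H. lra.
    + destruct (Hmid y) as [_ ->]. lra.
      destruct (Req_dec (f y) y) as [E|E].
      * rewrite E. apply Hmid. lra.
      * assert (f (f y) <> f y) by (intro E'; apply E, Jf; auto).
        apply Hsupp in H. apply Hmid. lra.
Qed.
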